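(* Assume: (H1) there exist real numbers $M_1<M_2$ such that for every $u\in C^1$: $\int_0^T f(t,u(t),u'(t))\,dt\neq0$ whenever $\min_{[0,T]}u'\ge M_2$, and $\int_0^T f(t,u(t),u'(t))\,dt\neq0$ whenever $\max_{[0,T]}u'\le M_1$; (H2) there exists $c\in C$ such that $f(t,x,y)\ge c(t)$ for all $(t,x,y)\in[0,T]\times\mathbb{R}\times\mathbb{R}$, and $L+2\|c^-\|_{L^1}<a$, where $L=\max\{|\varphi(M_2)|,|\varphi(M_1)|\}$. Let $r=\max\{|\varphi^{-1}(L+2\|c^-\|_{L^1})|,\ |\varphi^{-1}(-L-2\|c^-\|_{L^1})|\}$. If $(\lambda,u)\in\Omega$ satisfies $u=M(\lambda,u)$, then $$\|\lambda H(N_f(u)-Q(N_f(u)))+\varphi(P(u))\|_\infty<L+2\|c^-\|_{L^1}\quad\text{and}\quad \|u\|_1<r(2+T).$$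
   Context: Let $T>0$, $a>0$, let $\varphi:\mathbb{R}\to(-a,a)$ be a homeomorphism with $\varphi(0)=0$, and let $f:[0,T]\times\mathbb{R}\times\mathbb{R}\to\mathbb{R}$ be continuous. $C=C([0,T],\mathbb{R})$ carries the sup norm $\|\cdot\|_\infty$; $C^1=C^1([0,T],\mathbb{R})$ carries the norm $\|u\|_1=\|u\|_\infty+\|u'\|_\infty$; $\|\cdot\|_{L^1}$ is the norm of $L^1([0,T])$, and $c^-=\max\{-c,0\}$. Define $N_f:C^1\to C$, $N_f(u)(t)=f(t,u(t),u'(t))$; $H:C\to C^1$, $H(v)(t)=\int_0^t v(s)\,ds$; $Q:C\to C$, $Q(v)(t)=\frac1T\int_0^T v(s)\,ds$ (a constant function); $P:C\to C$, $P(u)(t)=u(0)$ (a constant function). For $v\in C$ with $\|v\|_\infty<a$, $\varphi^{-1}(v)\in C$ denotes $t\mapsto\varphi^{-1}(v(t))$, and $\varphi(v)$ is defined pointwise similarly. Let $$\Omega=\{(\lambda,u)\in[0,1]\times C^1:\ \|\lambda H(N_f(u)-Q(N_f(u)))+\varphi(P(u))\|_\infty<a\},$$ and for $(\lambda,u)\in\Omega$ let $$M(\lambda,u)=P(u)+Q(N_f(u))+H\big(\varphi^{-1}[\lambda H(N_f(u)-Q(N_f(u)))+\varphi(P(u))]\big).$$ *)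

(* Defs.v *)
From Stdlib Require Import Reals Lra ClassicalEpsilon.
Open Scope R_scope.

Definition integ (f : R -> R) (a b : R) : R :=
  match excluded_middle_informative (exists pr : Riemann_integrable f a b, True) with
  | left H =>
      let pr := proj1_sig (constructive_indefinite_description _ H) in RiemannInt pr
  | right _ => 0
  end.

Definition supnorm (T : R) (v : R -> R) : R :=
  match excluded_middle_informative
          (exists s, is_lub (fun y => exists t, 0 <= t <= T /\ y = Rabs (v t)) s) with
  | left H => proj1_sig (constructive_indefinite_description _ H)
  | right _ => 0
  end.

Definition cont_on (T : R) (g : R -> R) : Prop :=
  forall t, 0 <= t <= T -> forall eps, 0 < eps -> exists del, 0 < del /\
    forall s, 0 <= s <= T -> Rabs (s - t) < del -> Rabs (g s - g t) < eps.

Definition cont3_on (T : R) (f : R -> R -> R -> R) : Prop :=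
  forall t x y, 0 <= t <= T -> forall eps, 0 < eps -> exists del, 0 < del /\
    forall t' x' y', 0 <= t' <= T -> Rabs (t' - t) < del -> Rabs (x' - x) < del ->
      Rabs (y' - y) < del -> Rabs (f t' x' y' - f t x y) < eps.

Definition has_deriv_on (T : R) (u u' : R -> R) : Prop :=
  forall t, 0 <= t <= T -> forall eps, 0 < eps -> exists del, 0 < del /\
    forall s, 0 <= s <= T -> s <> t -> Rabs (s - t) < del ->
      Rabs ((u s - u t) / (s - t) - u' t) < eps.

Definition C1_on (T : R) (u u' : R -> R) : Prop :=
  has_deriv_on T u u' /\ cont_on T u'.

Definition Nf (f : R -> R -> R -> R) (u u' : R -> R) : R -> R := fun t => f t (u t) (u' t).
Definition Hop (v : R -> R) : R -> R := fun t => integ v 0 t.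
Definition Qop (T : R) (v : R -> R) : R := / T * integ v 0 T.
Definition Pop (u : R -> R) : R := u 0.

Definition Wop (T : R) (phi : R -> R) (f : R -> R -> R -> R) (lam : R) (u u' : R -> R)
  : R -> R :=
  fun t => lam * Hop (fun s => Nf f u u' s - Qop T (Nf f u u')) t + phi (Pop u).

Definition Mop (T : R) (phi phiinv : R -> R) (f : R -> R -> R -> R) (lam : R) (u u' : R -> R)
  : R -> R :=
  fun t => Pop u + Qop T (Nf f u u') + Hop (fun s => phiinv (Wop T phi f lam u u' s)) t.

(* Main.v *)
Require Import Defs.
From Stdlib Require Import Reals Lra Classical ClassicalEpsilon FunctionalExtensionality.
From Coquelicot Require Import Coquelicot.
Open Scope R_scope.

Definition cl (T x : R) := Rmin T (Rmax 0 x).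

Lemma cl_lip T x y : 0 <= T -> Rabs (cl T x - cl T y) <= Rabs (x - y).
Proof. intros; unfold cl, Rmin, Rmax; repeat destruct Rle_dec; unfold Rabs; repeat destruct Rcase_abs; lra. Qed.

Lemma cl_in T x : 0 <= T -> 0 <= cl T x <= T.
Proof. intros; unfold cl, Rmin, Rmax; repeat destruct Rle_dec; lra. Qed.

Lemma cl_id T x : 0 <= x <= T -> cl T x = x.
Proof. intros; unfold cl, Rmin, Rmax; repeat destruct Rle_dec; lra. Qed.

Lemma ext_cont T g : 0 <= T -> cont_on T g -> forall x, continuity_pt (fun x => g (cl T x)) x.
Proof.
  intros HT Hg x eps He.
  destruct (Hg (cl T x) (cl_in T x HT) eps He) as [d [Hd Hd2]].
  exists d; split; auto.
  intros y [_ Hy]. unfold R_dist in *; simpl in *. unfold R_dist in *.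
  apply Hd2. apply cl_in; auto.
  eapply Rle_lt_trans. apply cl_lip; auto. auto.
Qed.

Lemma exR T g s t : 0 <= T -> cont_on T g -> 0 <= s <= T -> 0 <= t <= T -> ex_RInt g s t.
Proof.
  intros HT Hg Hs Ht.
  apply ex_RInt_ext with (f := fun x => g (cl T x)).
  { intros x Hx. rewrite cl_id; auto.
    unfold Rmin, Rmax in Hx; destruct Rle_dec in Hx; lra. }
  apply (@ex_RInt_continuous R_CompleteNormedModule). intros z _.
  apply continuity_pt_filterlim. apply ext_cont; auto.
Qed.

Lemma integ_eq g a b : ex_RInt g a b -> integ g a b = RInt g a b.
Proof.
  intros H. unfold integ.
  destruct (excluded_middle_informative _) as [H'|H'].
  - symmetry; apply RInt_Reals.
  - exfalso; apply H'. exists (ex_RInt_Reals_0 _ _ _ H); trivial.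
Qed.

Lemma integ_00 g : integ g 0 0 = 0.
Proof.
  unfold integ.
  destruct (excluded_middle_informative _) as [H'|H'].
  - simpl. rewrite <- RInt_Reals. exact (@RInt_point R_CompleteNormedModule 0 g).
  - reflexivity.
Qed.

Lemma cont_on_ext T g h : (forall t, 0 <= t <= T -> g t = h t) -> cont_on T g -> cont_on T h.
Proof.
  intros E Hg t Ht eps He. destruct (Hg t Ht eps He) as [d [Hd Hd2]].
  exists d; split; auto. intros s Hs Hst. rewrite <- !E; auto.
Qed.

Lemma cont_on_lip T g F : cont_on T g -> (forall a b, Rabs (F a - F b) <= Rabs (a - b)) ->
  cont_on T (fun t => F (g t)).
Proof.
  intros Hg HF t Ht eps He. destruct (Hg t Ht eps He) as [d [Hd Hd2]].
  exists d; split; auto. intros s Hs Hst. eapply Rle_lt_trans. apply HF. auto.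
Qed.

Lemma cont_on_lin T g1 g2 k : cont_on T g1 -> cont_on T g2 -> cont_on T (fun t => g1 t + k * g2 t).
Proof.
  intros H1 H2 t Ht eps He.
  assert (Hk : 0 < 2 * (Rabs k + 1)) by (pose proof (Rabs_pos k); lra).
  destruct (H1 t Ht (eps/2)) as [d1 [Hd1 Hd1']]. lra.
  destruct (H2 t Ht (eps / (2 * (Rabs k + 1)))) as [d2 [Hd2 Hd2']].
  apply Rdiv_lt_0_compat; lra.
  exists (Rmin d1 d2); split. apply Rmin_pos; auto.
  intros s Hs Hst.
  assert (A := Hd1' s Hs ltac:(eapply Rlt_le_trans; [apply Hst|apply Rmin_l])).
  assert (B := Hd2' s Hs ltac:(eapply Rlt_le_trans; [apply Hst|apply Rmin_r])).
  replace (g1 s + k * g2 s - (g1 t + k * g2 t)) with ((g1 s - g1 t) + k * (g2 s - g2 t)) by ring.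
  eapply Rle_lt_trans. apply Rabs_triang. rewrite Rabs_mult.
  assert (Rabs k * Rabs (g2 s - g2 t) <= eps/2).
  { apply Rle_trans with ((Rabs k + 1) * (eps / (2 * (Rabs k + 1)))).
    apply Rmult_le_compat; try apply Rabs_pos; lra.
    right; field; pose proof (Rabs_pos k); lra. }
  lra.
Qed.

Lemma cont_on_const T q : cont_on T (fun _ => q).
Proof. intros t Ht eps He; exists 1; split; [lra|]; intros; rewrite Rminus_diag, Rabs_R0; auto. Qed.

Lemma lip_cont T F B : 0 <= B -> (forall s t, 0 <= s <= T -> 0 <= t <= T -> Rabs (F s - F t) <= B * Rabs (s - t)) -> cont_on T F.
Proof.
  intros HB H t Ht eps He. exists (eps / (B + 1)); split. apply Rdiv_lt_0_compat; lra.
  intros s Hs Hst. eapply Rle_lt_trans. apply H; auto.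
  apply Rle_lt_trans with ((B+1) * Rabs (s - t)).
  apply Rmult_le_compat_r. apply Rabs_pos. lra.
  apply Rlt_le_trans with ((B+1) * (eps / (B+1))).
  apply Rmult_lt_compat_l; lra. right; field; lra.
Qed.

Lemma deriv_cont T u u' : has_deriv_on T u u' -> cont_on T u.
Proof.
  intros H t Ht eps He.
  destruct (H t Ht 1 ltac:(lra)) as [d [Hd Hd2]].
  assert (Hp : 0 < Rabs (u' t) + 1) by (pose proof (Rabs_pos (u' t)); lra).
  exists (Rmin d (eps / (Rabs (u' t) + 1))); split.
  apply Rmin_pos; auto. apply Rdiv_lt_0_compat; lra.
  intros s Hs Hst.
  destruct (Req_dec s t) as [->|Hne]. rewrite Rminus_diag, Rabs_R0; auto.
  assert (A := Hd2 s Hs Hne ltac:(eapply Rlt_le_trans; [apply Hst|apply Rmin_l])).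
  set (q := (u s - u t) / (s - t)) in A.
  assert (E : u s - u t = q * (s - t)) by (unfold q; field; lra).
  rewrite E, Rabs_mult.
  assert (Rabs q < Rabs (u' t) + 1).
  { replace q with ((q - u' t) + u' t) by ring. eapply Rle_lt_trans. apply Rabs_triang. lra. }
  assert (Rabs (s - t) < eps / (Rabs (u' t) + 1)) by (eapply Rlt_le_trans; [apply Hst|apply Rmin_r]).
  apply Rle_lt_trans with ((Rabs (u' t) + 1) * Rabs (s - t)).
  apply Rmult_le_compat_r. apply Rabs_pos. lra.
  apply Rlt_le_trans with ((Rabs (u' t) + 1) * (eps / (Rabs (u' t) + 1))).
  apply Rmult_lt_compat_l; lra. right; field; lra.
Qed.

Lemma max_lemma T g : 0 <= T -> cont_on T g -> exists tm, 0 <= tm <= T /\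
  (forall t, 0 <= t <= T -> Rabs (g t) <= Rabs (g tm)) /\ supnorm T g = Rabs (g tm).
Proof.
  intros HT Hg.
  assert (Ha : cont_on T (fun t => Rabs (g t))).
  { apply cont_on_lip with (F := Rabs); auto. intros; apply Rabs_triang_inv2. }
  destruct (continuity_ab_maj (fun x => Rabs (g (cl T x))) 0 T HT) as [tm [H1 H2]].
  { intros c _. apply (ext_cont T (fun t => Rabs (g t))); auto. }
  rewrite cl_id in H1; auto.
  assert (Hb : forall t, 0 <= t <= T -> Rabs (g t) <= Rabs (g tm)).
  { intros t Ht. specialize (H1 t Ht). rewrite cl_id in H1; auto. }
  assert (Hl : is_lub (fun y => exists t, 0 <= t <= T /\ y = Rabs (g t)) (Rabs (g tm))).
  { split. intros y [t [Ht ->]]. apply Hb; auto.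
    intros b Hbd. apply Hbd. exists tm; auto. }
  exists tm; repeat split; auto; try lra.
  unfold supnorm. destruct (excluded_middle_informative _) as [H'|H'].
  - destruct (constructive_indefinite_description _ H') as [s Hs]; simpl.
    eapply is_lub_u; eauto.
  - exfalso; apply H'; eauto.
Qed.

Lemma abs_RInt_gen f a b M : ex_RInt f a b ->
  (forall x, Rmin a b <= x <= Rmax a b -> Rabs (f x) <= M) -> Rabs (RInt f a b) <= Rabs (b - a) * M.
Proof.
  intros Hf HM. destruct (Rle_dec a b) as [h|h].
  - rewrite (Rabs_right (b - a)) by lra. apply abs_RInt_le_const; auto.
    intros t Ht; apply HM. unfold Rmin, Rmax; destruct Rle_dec; lra.
  - rewrite <- (opp_RInt_swap f b a (ex_RInt_swap _ _ _ Hf)).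
    change (opp (RInt f b a)) with (- RInt f b a). rewrite Rabs_Ropp.
    rewrite (Rabs_left (b - a)) by lra. replace (- (b - a)) with (a - b) by ring.
    apply abs_RInt_le_const. lra. apply ex_RInt_swap; auto.
    intros t Ht; apply HM. unfold Rmin, Rmax; destruct Rle_dec; lra.
Qed.

Lemma RInt_diff g a s t : ex_RInt g a t -> ex_RInt g t s -> RInt g a s - RInt g a t = RInt g t s.
Proof.
  intros H1 H2. rewrite <- (RInt_Chasles g a t s H1 H2). change (plus ?x ?y) with (x + y). ring.
Qed.

Lemma deriv_RInt T u u' k C : 0 < T -> has_deriv_on T u u' -> cont_on T k ->
  (forall t, 0 <= t <= T -> u t = C + RInt k 0 t) -> forall t, 0 <= t <= T -> u' t = k t.
Proof.
  intros HT Hd Hk Hu t Ht.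
  destruct (Req_dec (u' t) (k t)) as [E|E]; auto. exfalso.
  set (e := Rabs (u' t - k t)).
  assert (He : 0 < e) by (apply Rabs_pos_lt; lra).
  destruct (Hd t Ht (e/2) ltac:(lra)) as [d1 [Hd1 Hd1']].
  destruct (Hk t Ht (e/2) ltac:(lra)) as [d2 [Hd2 Hd2']].
  set (d := Rmin d1 d2).
  assert (Hdp : 0 < d) by (apply Rmin_pos; auto).
  assert (exists s, 0 <= s <= T /\ s <> t /\ Rabs (s - t) < d) as [s [Hs [Hne Hst]]].
  { destruct (Rlt_dec t T).
    - exists (t + Rmin d (T - t) / 2).
      assert (0 < Rmin d (T - t)) by (apply Rmin_pos; lra).
      assert (Rmin d (T - t) <= d) by apply Rmin_l.
      assert (Rmin d (T - t) <= T - t) by apply Rmin_r.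
      repeat split; try lra. rewrite Rabs_right; lra.
    - exists (t - Rmin d T / 2).
      assert (0 < Rmin d T) by (apply Rmin_pos; lra).
      assert (Rmin d T <= d) by apply Rmin_l.
      assert (Rmin d T <= T) by apply Rmin_r.
      repeat split; try lra. rewrite Rabs_left; lra. }
  assert (A := Hd1' s Hs Hne ltac:(eapply Rlt_le_trans; [apply Hst|apply Rmin_l])).
  assert (Ek : ex_RInt k t s) by (apply (exR T); auto; lra).
  assert (E1 : u s - u t = RInt k t s).
  { rewrite (Hu s Hs), (Hu t Ht). rewrite <- (RInt_diff k 0 s t). ring.
    apply (exR T); auto; lra. auto. }
  assert (E2 : RInt (fun x => k x - k t) t s = RInt k t s - (s - t) * k t).
  { pose proof (RInt_minus k (fun _ => k t) t s Ek (ex_RInt_const _ _ _)) as HH.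
    rewrite RInt_const in HH. exact HH. }
  assert (B : Rabs (RInt (fun x => k x - k t) t s) <= Rabs (s - t) * (e/2)).
  { apply abs_RInt_gen.
    apply (ex_RInt_minus (V:=R_NormedModule) k (fun _ => k t)); auto. apply ex_RInt_const.
    intros x Hx. left. apply Hd2'.
    unfold Rmin, Rmax in Hx; destruct Rle_dec in Hx; lra.
    apply Rle_lt_trans with (Rabs (s - t)).
    unfold Rmin, Rmax in Hx; destruct Rle_dec in Hx; unfold Rabs; repeat destruct Rcase_abs; lra.
    eapply Rlt_le_trans; [apply Hst|apply Rmin_r]. }
  rewrite E2, <- E1 in B.
  assert (Hp : 0 < Rabs (s - t)) by (apply Rabs_pos_lt; lra).
  assert (C2 : Rabs ((u s - u t) / (s - t) - k t) <= e/2).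
  { replace ((u s - u t) / (s - t) - k t) with ((u s - u t - (s - t) * k t) / (s - t)) by (field; lra).
    unfold Rdiv; rewrite Rabs_mult, Rabs_inv.
    apply Rmult_le_reg_r with (Rabs (s - t)); auto.
    rewrite Rmult_assoc, Rinv_l by lra. lra. }
  assert (e < e).
  { unfold e at 1. replace (u' t - k t) with ((u' t - (u s - u t) / (s - t)) + ((u s - u t) / (s - t) - k t)) by ring.
    eapply Rle_lt_trans. apply Rabs_triang. rewrite Rabs_minus_sym. lra. }
  lra.
Qed.

Lemma ivt2 g p q v : continuity g -> p < q -> (g p < v < g q \/ g q < v < g p) ->
  exists s, p <= s <= q /\ g s = v.
Proof.
  intros Hg Hpq [[h1 h2]|[h1 h2]].
  - destruct (IVT (fun x => g x - v) p q) as [s [Hs Es]]; auto.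
    apply continuity_minus; auto. apply continuity_const; intros ? ?; auto. lra. lra.
    exists s; split; auto; lra.
  - destruct (IVT (fun x => v - g x) p q) as [s [Hs Es]]; auto.
    apply continuity_minus; auto. apply continuity_const; intros ? ?; auto. lra. lra.
    exists s; split; auto; lra.
Qed.

Lemma between phi : continuity phi -> (forall x y, phi x = phi y -> x = y) ->
  forall x y z, x < y < z -> (phi x < phi y < phi z) \/ (phi z < phi y < phi x).
Proof.
  intros Hc Hi x y z Hxyz.
  assert (phi x <> phi z) by (intro Hh; apply Hi in Hh; lra).
  assert (phi x <> phi y) by (intro Hh; apply Hi in Hh; lra).
  assert (phi y <> phi z) by (intro Hh; apply Hi in Hh; lra).
  destruct (Rlt_dec (phi x) (phi y)) as [h1|h1]; destruct (Rlt_dec (phi y) (phi z)) as [h2|h2].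
  - left; lra.
  - exfalso. destruct (Rlt_dec (phi x) (phi z)).
    + destruct (ivt2 phi x y (phi z)) as [s [Hs Es]]; auto; try lra. apply Hi in Es; lra.
    + destruct (ivt2 phi y z (phi x)) as [s [Hs Es]]; auto; try lra. apply Hi in Es; lra.
  - exfalso. destruct (Rlt_dec (phi x) (phi z)).
    + destruct (ivt2 phi y z (phi x)) as [s [Hs Es]]; auto; try lra. apply Hi in Es; lra.
    + destruct (ivt2 phi x y (phi z)) as [s [Hs Es]]; auto; try lra. apply Hi in Es; lra.
  - right; lra.
Qed.

Lemma mid phi : continuity phi -> (forall x y, phi x = phi y -> x = y) ->
  forall x y z, phi x < phi y < phi z -> (x < y < z) \/ (z < y < x).
Proof.
  intros Hc Hi x y z Hv.
  assert (x <> y) by (intro; subst; lra).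
  assert (y <> z) by (intro; subst; lra).
  assert (x <> z) by (intro; subst; lra).
  pose proof (between phi Hc Hi).
  destruct (Rtotal_order x y) as [a|[a|a]]; try lra;
  destruct (Rtotal_order y z) as [b|[b|b]]; try lra;
  destruct (Rtotal_order x z) as [c|[c|c]]; try lra.
  - specialize (H2 x z y ltac:(lra)); lra.
  - specialize (H2 z x y ltac:(lra)); lra.
  - specialize (H2 y x z ltac:(lra)); lra.
  - specialize (H2 y z x ltac:(lra)); lra.
Qed.

Theorem lemma3p2
  (T a : R) (hT : 0 < T) (ha : 0 < a)
  (phi phiinv : R -> R)
  (hphi_range : forall x, - a < phi x < a)
  (hphi_cont : continuity phi)
  (hphi_left : forall x, phiinv (phi x) = x)
  (hphi_right : forall y, - a < y < a -> phi (phiinv y) = y)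
  (hphiinv_cont : forall y, - a < y < a -> continuity_pt phiinv y)
  (hphi0 : phi 0 = 0)
  (f : R -> R -> R -> R) (hf : cont3_on T f)
  (M1 M2 : R) (hM : M1 < M2)
  (H1a : forall u u' : R -> R, C1_on T u u' ->
           (forall t, 0 <= t <= T -> M2 <= u' t) -> integ (Nf f u u') 0 T <> 0)
  (H1b : forall u u' : R -> R, C1_on T u u' ->
           (forall t, 0 <= t <= T -> u' t <= M1) -> integ (Nf f u u') 0 T <> 0)
  (c : R -> R) (hc : cont_on T c)
  (hfc : forall t x y, 0 <= t <= T -> c t <= f t x y)
  (hLa : Rmax (Rabs (phi M2)) (Rabs (phi M1))
           + 2 * integ (fun t => Rmax (- c t) 0) 0 T < a)
  (lam : R) (u u' : R -> R)
  (hlam : 0 <= lam <= 1) (hu : C1_on T u u')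
  (hOmega : supnorm T (Wop T phi f lam u u') < a)
  (hfix : forall t, 0 <= t <= T -> u t = Mop T phi phiinv f lam u u' t) :
  let L := Rmax (Rabs (phi M2)) (Rabs (phi M1)) in
  let K := L + 2 * integ (fun t => Rmax (- c t) 0) 0 T in
  let r := Rmax (Rabs (phiinv K)) (Rabs (phiinv (- K))) in
  supnorm T (Wop T phi f lam u u') < K /\
  supnorm T u + supnorm T u' < r * (2 + T).
Proof.
  cbv zeta.
  set (L := Rmax (Rabs (phi M2)) (Rabs (phi M1))) in *.
  set (I := integ (fun t => Rmax (- c t) 0) 0 T) in *.
  set (K := L + 2 * I) in *.
  set (r := Rmax (Rabs (phiinv K)) (Rabs (phiinv (- K)))).
  assert (HT0 : 0 <= T) by lra.
  pose proof hu as hu0. destruct hu as [hd hc'].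
  assert (hinj : forall x y, phi x = phi y -> x = y).
  { intros x y E. rewrite <- (hphi_left x), <- (hphi_left y), E; auto. }
  set (N := Nf f u u') in *.
  assert (hucont := deriv_cont T u u' hd).
  assert (hN : cont_on T N).
  { intros t Ht eps He.
    destruct (hf t (u t) (u' t) Ht eps He) as [d [Hd Hd2]].
    destruct (hucont t Ht d Hd) as [d1 [Hd1 Hd1']].
    destruct (hc' t Ht d Hd) as [d2 [Hd2p Hd2']].
    exists (Rmin d (Rmin d1 d2)); split. repeat apply Rmin_pos; auto.
    intros s Hs Hst.
    assert (Rmin d (Rmin d1 d2) <= d) by apply Rmin_l.
    assert (Rmin d (Rmin d1 d2) <= Rmin d1 d2) by apply Rmin_r.
    assert (Rmin d1 d2 <= d1) by apply Rmin_l.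
    assert (Rmin d1 d2 <= d2) by apply Rmin_r.
    unfold N, Nf. apply Hd2; auto; try lra.
    apply Hd1'; auto; lra. apply Hd2'; auto; lra. }
  assert (hQ : Qop T N = 0).
  { specialize (hfix 0 ltac:(lra)). unfold Mop, Hop, Pop in hfix.
    rewrite integ_00 in hfix. unfold N; lra. }
  assert (hI : integ N 0 T = 0).
  { unfold Qop in hQ. apply Rmult_integral in hQ. destruct hQ as [h|h]; auto.
    exfalso. apply Rinv_neq_0_compat in h; lra. }
  assert (hIR : RInt N 0 T = 0).
  { rewrite <- integ_eq; auto. apply (exR T); auto; lra. }
  set (w := Wop T phi f lam u u') in *.
  assert (hwE : forall t, 0 <= t <= T -> w t = lam * RInt N 0 t + phi (u 0)).
  { intros t Ht. unfold w, Wop, Hop, Pop. fold N. rewrite hQ.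
    replace (fun s => N s - 0) with N by (extensionality s; ring).
    rewrite integ_eq; auto. apply (exR T); auto; lra. }
  destruct (max_lemma T N HT0 hN) as [tN [HtN [HbN _]]].
  assert (hw : cont_on T w).
  { apply cont_on_ext with (g := fun t => lam * RInt N 0 t + phi (u 0)).
    intros; symmetry; auto.
    apply lip_cont with (B := Rabs lam * Rabs (N tN)).
    apply Rmult_le_pos; apply Rabs_pos.
    intros s t Hs Ht.
    replace (lam * RInt N 0 s + phi (u 0) - (lam * RInt N 0 t + phi (u 0)))
      with (lam * (RInt N 0 s - RInt N 0 t)) by ring.
    rewrite RInt_diff. rewrite Rabs_mult, Rmult_assoc.
    apply Rmult_le_compat_l. apply Rabs_pos.
    rewrite Rmult_comm. apply abs_RInt_gen. apply (exR T); auto.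
    intros x Hx. apply HbN. unfold Rmin, Rmax in Hx; destruct Rle_dec in Hx; lra.
    apply (exR T); auto; lra. apply (exR T); auto. }
  destruct (max_lemma T w HT0 hw) as [tw [Htw [Hbw Hsw]]].
  assert (hwa : forall t, 0 <= t <= T -> - a < w t < a).
  { intros t Ht. pose proof (Hbw t Ht). assert (HH : Rabs (w t) < a) by (rewrite Hsw in hOmega; lra).
    apply Rabs_def2 in HH; lra. }
  set (k := fun s => phiinv (w s)).
  assert (hk : cont_on T k).
  { intros t Ht eps He.
    destruct (hphiinv_cont (w t) (hwa t Ht) eps He) as [alp [Halp Halp']].
    destruct (hw t Ht alp Halp) as [d [Hd Hd']].
    exists d; split; auto. intros s Hs Hst.
    destruct (Req_dec (w s) (w t)) as [E|E].
    unfold k; rewrite E, Rminus_diag, Rabs_R0; lra.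
    apply (Halp' (w s)). split. split. constructor. auto. apply Hd'; auto. }
  assert (hu_eq : forall t, 0 <= t <= T -> u t = (u 0 + Qop T N) + RInt k 0 t).
  { intros t Ht. rewrite (hfix t Ht). unfold Mop, Hop, Pop.
    rewrite <- (integ_eq k 0 t). reflexivity. apply (exR T); auto; lra. }
  assert (hu'k := deriv_RInt T u u' k _ hT hd hk hu_eq).
  assert (hpw : forall t, 0 <= t <= T -> phi (u' t) = w t).
  { intros t Ht. rewrite hu'k; auto. unfold k. apply hphi_right; auto. }
  assert (Ht0 : exists t0, 0 <= t0 <= T /\ u' t0 < M2).
  { destruct (classic (exists t0, 0 <= t0 <= T /\ u' t0 < M2)) as [h|Hn]; auto.
    exfalso. apply (H1a u u' hu0); auto. intros t Ht.
    destruct (Rlt_or_le (u' t) M2); auto. exfalso; apply Hn; eauto. }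
  assert (Ht1 : exists t1, 0 <= t1 <= T /\ M1 < u' t1).
  { destruct (classic (exists t1, 0 <= t1 <= T /\ M1 < u' t1)) as [h|Hn]; auto.
    exfalso. apply (H1b u u' hu0); auto. intros t Ht.
    destruct (Rlt_or_le M1 (u' t)); auto. exfalso; apply Hn; eauto. }
  destruct Ht0 as [t0 [Ht0 Ht0']]. destruct Ht1 as [t1 [Ht1 Ht1']].
  assert (Htau : exists tau, 0 <= tau <= T /\ M1 < u' tau < M2).
  { destruct (Rlt_dec M1 (u' t0)). exists t0; split; auto.
    destruct (Rlt_dec (u' t1) M2). exists t1; split; auto.
    set (g := fun x => u' (cl T x)).
    assert (hg : continuity g) by (intro x; apply ext_cont; auto).
    assert (g t0 = u' t0) by (unfold g; rewrite cl_id; auto).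
    assert (g t1 = u' t1) by (unfold g; rewrite cl_id; auto).
    destruct (Rtotal_order t0 t1) as [h|[h|h]].
    - destruct (ivt2 g t0 t1 ((M1+M2)/2) hg h) as [s [Hs Es]]. left; lra.
      exists s. unfold g in Es; rewrite cl_id in Es by lra. split; lra.
    - subst; lra.
    - destruct (ivt2 g t1 t0 ((M1+M2)/2) hg h) as [s [Hs Es]]. right; lra.
      exists s. unfold g in Es; rewrite cl_id in Es by lra. split; lra. }
  destruct Htau as [tau [Htau Htau']].
  assert (hLt : Rabs (w tau) < L).
  { rewrite <- hpw; auto.
    destruct (between phi hphi_cont hinj M1 (u' tau) M2 Htau') as [h|h];
    unfold L, Rmax; destruct Rle_dec as [q|q]; revert h q; unfold Rabs; repeat destruct Rcase_abs; lra. }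
  set (cm := fun t => Rmax (- c t) 0) in *.
  assert (hcm : cont_on T cm).
  { apply cont_on_lip with (F := fun a => Rmax (- a) 0); auto.
    intros x y. unfold Rmax; repeat destruct Rle_dec; unfold Rabs; repeat destruct Rcase_abs; lra. }
  assert (hIc : I = RInt cm 0 T) by (apply integ_eq; apply (exR T); auto; lra).
  set (aN := fun t => Rabs (N t)).
  assert (haN : cont_on T aN).
  { apply cont_on_lip with (F := Rabs); auto. intros; apply Rabs_triang_inv2. }
  assert (hkey : RInt aN 0 T <= 2 * RInt cm 0 T).
  { assert (E1 : ex_RInt (fun x => N x + 2 * cm x) 0 T).
    { apply (exR T); auto; try lra. apply cont_on_lin; auto. }
    apply Rle_trans with (RInt (fun x => N x + 2 * cm x) 0 T).
    apply RInt_le; auto. apply (exR T); auto; lra.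
    intros x Hx. unfold aN, cm. pose proof (hfc x (u x) (u' x) ltac:(lra)).
    unfold N, Nf. unfold Rmax; destruct Rle_dec; unfold Rabs; destruct Rcase_abs; lra.
    pose proof (RInt_plus N (fun x => 2 * cm x) 0 T ltac:(apply (exR T); auto; lra)
      ltac:(apply (exR T); auto; try lra; apply (cont_on_ext T (fun t => 0 + 2 * cm t));
        [intros; ring | apply cont_on_lin; auto; apply cont_on_const])) as HH.
    pose proof (RInt_scal cm 0 T 2 ltac:(apply (exR T); auto; lra)) as HS.
    assert (HS' : RInt (fun x => 2 * cm x) 0 T = 2 * RInt cm 0 T) by exact HS.
    assert (HH' : RInt (fun x => N x + 2 * cm x) 0 T = RInt N 0 T + RInt (fun x => 2 * cm x) 0 T) by exact HH.
    rewrite HH', HS', hIR. lra. }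
  assert (hsub : forall p q, 0 <= p <= T -> 0 <= q <= T -> Rabs (RInt N p q) <= RInt aN 0 T).
  { assert (G : forall p q, 0 <= p <= T -> 0 <= q <= T -> p <= q -> Rabs (RInt N p q) <= RInt aN 0 T).
    { intros p q Hp Hq Hpq.
      eapply Rle_trans. apply abs_RInt_le; auto. apply (exR T); auto.
      fold aN.
      assert (C1 := RInt_Chasles aN 0 p q ltac:(apply (exR T); auto; lra) ltac:(apply (exR T); auto)).
      assert (C2 := RInt_Chasles aN 0 q T ltac:(apply (exR T); auto; lra) ltac:(apply (exR T); auto; lra)).
      change (plus ?x ?y) with (x + y) in C1, C2.
      assert (0 <= RInt aN 0 p).
      { apply RInt_ge_0; try lra. apply (exR T); auto; lra. intros; apply Rabs_pos. }
      assert (0 <= RInt aN q T).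
      { apply RInt_ge_0; try lra. apply (exR T); auto; lra. intros; apply Rabs_pos. }
      lra. }
    intros p q Hp Hq. destruct (Rle_dec p q). apply G; auto.
    rewrite <- (opp_RInt_swap N q p). change (opp ?x) with (- x). rewrite Rabs_Ropp.
    apply G; auto; lra. apply (exR T); auto. }
  assert (hcl1 : forall t, 0 <= t <= T -> Rabs (w t) < K).
  { intros t Ht.
    assert (E : w t = w tau + lam * RInt N tau t).
    { rewrite !hwE; auto. rewrite <- (RInt_diff N 0 t tau). ring.
      apply (exR T); auto; lra. apply (exR T); auto. }
    rewrite E. eapply Rle_lt_trans. apply Rabs_triang.
    rewrite Rabs_mult.
    assert (Rabs lam <= 1) by (rewrite Rabs_right; lra).
    assert (Rabs lam * Rabs (RInt N tau t) <= Rabs (RInt N tau t)).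
    { rewrite <- (Rmult_1_l (Rabs (RInt N tau t))) at 2. apply Rmult_le_compat_r; auto. apply Rabs_pos. }
    specialize (hsub tau t Htau Ht). unfold K. rewrite hIc. lra. }
  split.
  { rewrite Hsw. apply hcl1; auto. }
  assert (hI0 : 0 <= I).
  { rewrite hIc. apply RInt_ge_0; try lra. apply (exR T); auto; lra.
    intros; unfold cm; apply Rmax_r. }
  assert (hL0 : 0 <= L) by (unfold L; eapply Rle_trans; [apply Rabs_pos | apply Rmax_l]).
  assert (hKa : - a < K < a) by (unfold K in *; lra).
  assert (hKa' : - a < - K < a) by lra.
  assert (hr : forall t, 0 <= t <= T -> Rabs (u' t) < r).
  { intros t Ht. specialize (hcl1 t Ht).
    assert (hm : phi (phiinv (- K)) < phi (u' t) < phi (phiinv K)).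
    { rewrite hpw, !hphi_right; auto. revert hcl1; unfold Rabs; destruct Rcase_abs; lra. }
    destruct (mid phi hphi_cont hinj _ _ _ hm) as [h|h];
    unfold r, Rmax; destruct Rle_dec as [q|q]; revert h q; unfold Rabs; repeat destruct Rcase_abs; lra. }
  assert (hr0 : 0 <= r) by (unfold r; eapply Rle_trans; [apply Rabs_pos | apply Rmax_l]).
  destruct (max_lemma T u' HT0 hc') as [t2 [Ht2 [_ Hs2]]].
  assert (hs2 : supnorm T u' < r) by (rewrite Hs2; auto).
  assert (hu0e : u' 0 = u 0).
  { apply hinj. rewrite hpw by lra. rewrite hwE by lra.
    rewrite (@RInt_point R_CompleteNormedModule 0 N). change (@zero R_CompleteNormedModule) with 0. ring. }
  assert (hub : forall t, 0 <= t <= T -> Rabs (u t) < r + T * r).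
  { intros t Ht. rewrite hu_eq, hQ; auto.
    assert (Rabs (RInt k 0 t) <= Rabs (t - 0) * r).
    { apply abs_RInt_gen. apply (exR T); auto; lra.
      intros x Hx. rewrite <- hu'k. left; apply hr.
      all: unfold Rmin, Rmax in Hx; destruct Rle_dec in Hx; lra. }
    rewrite (Rabs_right (t - 0)) in H by lra.
    assert ((t - 0) * r <= T * r) by (apply Rmult_le_compat_r; lra).
    assert (Rabs (u 0) < r) by (rewrite <- hu0e; apply hr; lra).
    eapply Rle_lt_trans. apply Rabs_triang. rewrite Rplus_0_r. lra. }
  destruct (max_lemma T u HT0 hucont) as [t3 [Ht3 [_ Hs3]]].
  assert (supnorm T u < r + T * r) by (rewrite Hs3; auto).
  replace (r * (2 + T)) with (r + T * r + r) by ring. lra.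
Qed.
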